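(* There is a function $\varepsilon(k)\to0$ as $k\to\infty$ such that for every $k$, every $k$ families $F_1,\dots,F_k$ of functions with domain $X$ and codomain $\{0,1\}$, and every function $g:\{0,1\}^k\to\{0,1\}$, \[\mathrm{opt}_{\mathrm{std}}(\mathrm{COMPOSE}(F_1,\dots,F_k,g))\le(1+\varepsilon(k))\log_2(k)\sum_{i=1}^k\mathrm{opt}_{\mathrm{std}}(F_i).\]
   Context: For a family $F$ of functions from a set $X$ to a set $Y$, $\mathrm{opt}_{\mathrm{std}}(F)$ is the worst-case number of mistakes in the standard online learning model under optimal play: an adversary secretly fixes $f\in F$ and presents inputs $x_1,x_2,\dots\in X$ adaptively; after each input the learner guesses $f(x_t)$ and the adversary then reveals $f(x_t)$; a mistake is an incorrect guess; the learner minimizes and the adversary maximizes the number of mistakes. $\mathrm{COMPOSE}(F_1,\dots,F_k,g)$ is the family of all functions $x\mapsto g(f_1(x),\dots,f_k(x))$ on $X$ with $f_i\in F_i$ for each $i$. *)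

(* Defs.v *)
From HB Require Import structures.
From mathcomp Require Import all_boot all_order all_algebra.
From mathcomp Require Import all_classical all_reals all_analysis.
Set Implicit Arguments. Unset Strict Implicit. Unset Printing Implicit Defensive.
Import Order.TTheory GRing.Theory Num.Theory.
Local Open Scope classical_set_scope.
Local Open Scope ring_scope.

(* A deterministic online learner: given the history of (input, true label)
   pairs so far and the current input, it guesses the label. *)
Definition learner (X : Type) := seq (X * bool) -> X -> bool.

Fixpoint mistakes_from (X : Type) (L : learner X) (f : X -> bool)
  (hist : seq (X * bool)) (xs : seq X) : nat :=
  match xs with
  | [::] => 0%N
  | x :: xs' => ((L hist x != f x) : nat) + mistakes_from L f (rcons hist (x, f x)) xs'
  end.

Definition mistakes (X : Type) (L : learner X) (f : X -> bool) (xs : seq X) : nat :=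
  mistakes_from L f [::] xs.

(* Worst-case number of mistakes of L over all targets f in F and all finite
   input sequences (adaptive adversary vs deterministic learner). The value 0
   is included so that the empty family gets value 0. *)
Definition worst_mistakes (R : realType) (X : Type) (F : set (X -> bool))
  (L : learner X) : \bar R :=
  ereal_sup ([set 0%E] `|`
             [set ((mistakes L f xs)%:R)%:E | f in F & xs in [set: seq X]]).

Definition opt_std (R : realType) (X : Type) (F : set (X -> bool)) : \bar R :=
  ereal_inf [set worst_mistakes R F L | L in [set: learner X]].

Definition COMPOSE (X : Type) (k : nat) (F : 'I_k -> set (X -> bool))
  (g : {ffun 'I_k -> bool} -> bool) : set (X -> bool) :=
  [set h | exists fs : 'I_k -> X -> bool,
     (forall i, F i (fs i)) /\ h = (fun x => g [ffun i => fs i x])].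

(* Main.v *)
Require Import Defs.
From HB Require Import structures.
From mathcomp Require Import all_boot all_order all_algebra.
From mathcomp Require Import all_classical all_reals all_analysis.
From mathcomp Require Import zify ring lra.
Import Order.TTheory GRing.Theory Num.Theory.
Set Implicit Arguments. Unset Strict Implicit. Unset Printing Implicit Defensive.

Lemma card_bigcup_le (I T : finType) (P : pred I) (A : I -> {set T}) :
  #|\bigcup_(i | P i) A i| <= \sum_(i | P i) #|A i|.
Proof.
elim/big_rec2: _ => [|i n U _ le]; first by rewrite cards0.
by rewrite (leq_trans (leq_card_setU _ _).1) ?leq_add2l.
Qed.

Lemma mistakes_from_sum (X : Type) (L : learner X) f (x0 : X) xs : forall h,
  mistakes_from L f h xs =
  \sum_(l < size xs) (L (h ++ take l [seq (z, f z) | z <- xs]) (nth x0 xs l)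
                       != f (nth x0 xs l) : nat).
Proof.
elim: xs => [|x xs IH] h /=; first by rewrite big_ord0.
rewrite big_ord_recl /= cats0 IH; congr (_ + _).
by apply: eq_bigr => l _; rewrite /= cat_rcons.
Qed.

Section Master.
Variables (X : Type) (k : nat) (L : 'I_k -> learner X)
  (g : {ffun 'I_k -> bool} -> bool) (H D : nat).

Definition ET := {set 'I_H * 'I_k}.

Definition flip (P : ET) (m : nat) (i : 'I_k) : bool :=
  [exists t : 'I_H, (val t == m) && ((t, i) \in P)].

Fixpoint simh (P : ET) (i : 'I_k) (h : seq (X * bool)) (xs : seq X) :=
  match xs with
  | [::] => h
  | x :: xs' => simh P i (rcons h (x, L i h x (+) flip P (size h) i)) xs'
  end.

Definition epred (P : ET) (xs : seq X) (x : X) : bool :=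
  g [ffun i => L i (simh P i [::] xs) x (+) flip P (size xs) i].

Fixpoint consis (P : ET) (past : seq X) (hm : seq (X * bool)) : bool :=
  match hm with
  | [::] => true
  | p :: hm' => (epred P past p.1 == p.2) && consis P (rcons past p.1) hm'
  end.

Definition Eset : {set ET} := [set P : ET | #|P| <= D].
Definition V hm : {set ET} := [set P in Eset | consis P [::] hm].
Definition mpred hm x : bool :=
  #|V hm| <= 2 * #|[set P in V hm | epred P (map fst hm) x]|.

Fixpoint mk (hm hist : seq (X * bool)) :=
  match hist with
  | [::] => hm
  | p :: hist' => mk (if mpred hm p.1 != p.2 then rcons hm p else hm) hist'
  end.

Definition master : learner X := fun hist x => mpred (mk [::] hist) x.

Lemma mk_cat hm h1 h2 : mk hm (h1 ++ h2) = mk (mk hm h1) h2.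
Proof. by elim: h1 hm => [|p h1 IH] hm //=. Qed.

Lemma mistakes_master f xs : forall hist,
  mistakes_from master f hist xs + size (mk [::] hist) =
  size (mk [::] (hist ++ [seq (x, f x) | x <- xs])).
Proof.
elim: xs => [|x xs IH] hist /=; first by rewrite cats0.
rewrite -cat_rcons -IH -cats1 mk_cat /= /master.
case: (mpred _ x != f x); rewrite ?size_rcons /=; lia.
Qed.

Lemma simh_rcons P i h ys x :
  simh P i h (rcons ys x) =
  rcons (simh P i h ys) (x, L i (simh P i h ys) x (+) flip P (size (simh P i h ys)) i).
Proof. by elim: ys h => [|y ys IH] h //=. Qed.

Lemma size_simh P i h ys : size (simh P i h ys) = size h + size ys.
Proof. elim: ys h => [|y ys IH] h /=; rewrite ?addn0 // IH size_rcons; lia. Qed.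

Lemma consis_rcons P past hm x y :
  consis P past (rcons hm (x, y)) =
  consis P past hm && (epred P (past ++ map fst hm) x == y).
Proof.
elim: hm past => [|p hm IH] past /=; first by rewrite cats0 andbT.
by rewrite IH cat_rcons andbA.
Qed.

Lemma V_rcons hm x y :
  V (rcons hm (x, y)) = [set P in V hm | epred P (map fst hm) x == y].
Proof.
by apply/setP => P; rewrite !inE consis_rcons /= andbA.
Qed.

Lemma halving hm x y : mpred hm x != y -> 2 * #|V (rcons hm (x, y))| <= #|V hm|.
Proof.
rewrite V_rcons /mpred.
set A := V hm.
have E1 : #|[set P in A | epred P [seq i.1 | i <- hm] x]| +
          #|[set P in A | ~~ epred P [seq i.1 | i <- hm] x]| = #|A|.
  rewrite -(cardsID [set P | epred P [seq i.1 | i <- hm] x] A); congr (_ + _);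
  by apply: eq_card => P; rewrite !inE // andbC.
case: y => /=.
  move=> lt.
  have -> : [set P in A | epred P [seq i.1 | i <- hm] x == true] =
            [set P in A | epred P [seq i.1 | i <- hm] x].
    by apply/setP => P; rewrite !inE eqb_id.
  move: lt; case: leqP => // lt _; exact: ltnW.
move=> le.
have -> : [set P in A | epred P [seq i.1 | i <- hm] x == false] =
          [set P in A | ~~ epred P [seq i.1 | i <- hm] x].
  by apply/setP => P; rewrite !inE eqbF_neg.
move: le; case: leqP => // le _. move: E1 le; clearbody A.
set a := #|[set P in A | epred P _ x]|. set b := #|[set P in A | ~~ epred P _ x]|. clearbody a b. set c := #|A|. clearbody c. lia.
Qed.


Variables (fs : 'I_k -> X -> bool) (d : 'I_k -> nat).
Hypothesis Lbound : forall i xs, mistakes (L i) (fs i) xs <= d i.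
Hypothesis dsum : \sum_i d i <= D.
Definition hh x := g [ffun i => fs i x].

Lemma exP (x0 : X) hm : size hm <= H -> all (fun p => p.2 == hh p.1) hm ->
  exists P, P \in V hm.
Proof.
move=> szH allh.
set xs := map fst hm.
have sxs : size xs = size hm by rewrite size_map.
pose th i := [seq (z, fs i z) | z <- xs].
pose err i l := L i (take l (th i)) (nth x0 xs l) != fs i (nth x0 xs l).
pose S i := [set t : 'I_H | (t < size xs) && err i t].
pose Pst := [set p : 'I_H * 'I_k | p.1 \in S p.2].
exists Pst.
have hS : forall i, #|S i| <= d i.
  move=> i; apply: leq_trans (Lbound i xs).
  rewrite /mistakes (mistakes_from_sum _ _ x0) -sum1_card big_mkcond /=.
  have -> : \sum_(t < H) (if t \in S i then 1 else 0) =
            \sum_(t < H) ((t < size xs) && err i t : nat).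
    by apply: eq_bigr => t _; rewrite inE; case: ifP.
  rewrite -(big_mkord xpredT (fun l => ((l < size xs) && err i l : nat))).
  rewrite (big_cat_nat (n := size xs)) //=; last by rewrite sxs.
  have -> : \sum_(size xs <= l < H) ((l < size xs) && err i l : nat) = 0.
    by rewrite big_nat_cond big1 // => l /andP[/andP[le _] _]; rewrite ltnNge le.
  rewrite addn0.
  rewrite big_mkord; apply: eq_leq; apply: eq_bigr => l _.
  by rewrite ltn_ord.
have hcard : #|Pst| <= D.
  apply: leq_trans dsum.
  apply: (@leq_trans #|\bigcup_(i | true) [set (t, i) | t in S i]|).
    apply: subset_leq_card; apply/fintype.subsetP => -[t i] tP.
    by apply/bigcupP; exists i => //; apply/imsetP; exists t => //; move: tP; rewrite inE.
  apply: leq_trans (card_bigcup_le _ _) _.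
  by apply: leq_sum => i _; apply: leq_trans (leq_imset_card _ _) (hS i).
have hflip : forall i l, l < size xs -> flip Pst l i = err i l.
  move=> i l lt; apply/existsP/idP.
    by case=> t /andP[/eqP <-]; rewrite [_ \in Pst]inE [_ \in S _]inE => /andP[_ ->].
  have lH : l < H by rewrite (leq_trans lt) // sxs.
  move=> e; exists (Ordinal lH); rewrite [_ \in Pst]inE [_ \in S _]inE.
  by apply/and3P; split; [exact: eqxx | exact: lt | exact: e].
have hsim : forall i n, n <= size xs -> simh Pst i [::] (take n xs) = take n (th i).
  move=> i; elim=> [|n IH] le. rewrite !take0. done.
  rewrite (take_nth x0 le) simh_rcons IH; last exact: ltnW.
  have le' : n < size (th i) by rewrite size_map.
  rewrite (take_nth (x0, false) le') size_takel; last exact: ltnW.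
  rewrite hflip; last exact: le.
  rewrite (nth_map x0); last exact: le.
  congr (rcons _ (_, _)).
  rewrite /err; case: (L i _ _); case: (fs i _); reflexivity.
have hcons : forall suf pre, hm = pre ++ suf -> consis Pst (map fst pre) suf.
  elim=> [|[x y] suf IH] pre E //=.
  apply/andP; split; last first.
    have := IH (rcons pre (x, y)); rewrite map_rcons; apply.
    by rewrite E cat_rcons.
  have exs : xs = map fst pre ++ x :: map fst suf by rewrite /xs E map_cat.
  set l := size pre.
  have sl : size (map fst pre) = l by rewrite size_map.
  have lt : l < size xs by rewrite exs size_cat /= sl; lia.
  have px : take l xs = map fst pre by rewrite exs -sl take_size_cat.
  have nx : nth x0 xs l = x by rewrite exs nth_cat sl ltnn subnn.
  have yh : y = hh x.
    move: allh; rewrite E all_cat => /andP[_ /andP[/eqP yx _]].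
    exact: yx.
  rewrite -px /epred yh /hh size_takel; last exact: ltnW.
  apply/eqP; congr g; apply/ffunP => i; rewrite !ffunE.
  rewrite hsim; last exact: ltnW.
  rewrite hflip; last exact: lt.
  rewrite /err nx.
  case: (L i _ _); case: (fs i _); reflexivity.
have := hcons hm [::] (erefl _).
move=> hc.
rewrite [_ \in V hm]inE; apply/andP; split; last exact: hc.
rewrite [_ \in Eset]inE; exact: hcard.
Qed.
Lemma mk_bound hist : forall hm, 2 ^ size hm * #|V hm| <= #|Eset| ->
  size hm < H -> all (fun p => p.2 == hh p.1) hm ->
  all (fun p => p.2 == hh p.1) hist -> #|Eset| < 2 ^ H ->
  size (mk hm hist) < H.
Proof.
elim: hist => [|[x y] hist IH] hm inv szh allhm //= /andP[/= /eqP yh allh] NH.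
case: ifP => mis; apply: IH => //.
- have hv := halving mis.
  rewrite size_rcons expnS; apply: leq_trans inv.
  by rewrite -mulnA mulnCA leq_mul2l hv orbT.
- have allhm' : all (fun p => p.2 == hh p.1) (rcons hm (x, y)).
    by rewrite all_rcons /= yh eqxx.
  have szr : size (rcons hm (x, y)) <= H by rewrite size_rcons.
  have [P PV] := exP x szr allhm'.
  have h1 : 0 < #|V (rcons hm (x, y))| by apply/card_gt0P; exists P.
  have : 2 ^ size (rcons hm (x, y)) < 2 ^ H.
    apply: leq_ltn_trans NH; apply: leq_trans inv.
    have h2 : 2 <= #|V hm|.
      have hv := halving mis; move: hv h1.
      set a := #|V (rcons hm (x, y))|; set b := #|V hm|; clearbody a b; lia.
    by rewrite size_rcons expnS [2 * _]mulnC; apply: leq_mul.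
  by rewrite ltn_exp2l.
- by rewrite all_rcons /= yh eqxx.
Qed.

Lemma master_bound : #|Eset| < 2 ^ H -> forall xs, mistakes master hh xs <= H.-1.
Proof.
move=> NH xs.
have := mistakes_master hh xs [::]; rewrite /= addn0 /mistakes => ->.
have s0 : (finset.set0 : ET) \in Eset by rewrite inE cards0.
have H0 : 0 < H.
  have c1 : 0 < #|Eset| by apply/card_gt0P; exists finset.set0.
  rewrite -(ltn_exp2l 0 _ (isT : 1 < 2)) expn0; exact: leq_ltn_trans c1 NH.
rewrite -ltnS prednK //; apply: mk_bound => //=.
- by rewrite expn0 mul1n; apply: subset_leq_card; apply/fintype.subsetP => P; rewrite inE => /andP[].
- by elim: (xs) => //= x xs' ->; rewrite eqxx.
Qed.

End Master.

Lemma expn_leb m n e : m <= n -> m ^ e <= n ^ e.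
Proof. by move=> le; elim: e => [|e IH] //; rewrite !expnS leq_mul. Qed.

Lemma ffact_le_exp j q : q ^_ j <= q ^ j.
Proof.
elim: j q => [|j IH] q; first by rewrite ffactn0 expn0.
rewrite ffactnS expnS leq_mul2l; apply/orP; right.
apply: leq_trans (IH _) _; apply: expn_leb; exact: leq_pred.
Qed.

Lemma exp2_fact j : 2 ^ j <= 2 * j`!.
Proof.
elim: j => [|j IH] //; rewrite expnS factS.
case: j IH => [|j] IH //.
have := fact_gt0 j.+1; move: IH; set a := j.+1`!; set b := 2 ^ j.+1; lia.
Qed.

Lemma sum_geom_bound (a : nat -> nat) Q :
  (forall j, a j * 2 ^ j <= 2 * Q) -> forall m,
  2 ^ m * (\sum_(1 <= j < m.+1) a j) + 2 * Q <= 2 * Q * 2 ^ m.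
Proof.
move=> ha; elim=> [|m IH]; first by rewrite big_geq // muln0 expn0 muln1.
rewrite big_nat_recr //= expnS.
have := ha m.+1; rewrite expnS.
move: IH; set S := \sum_(1 <= j < m.+1) a j; set p := 2 ^ m; set b := a m.+1.
nia.
Qed.

Lemma e_bound q : (q + 1) ^ q <= 3 * q ^ q.
Proof.
rewrite expnDn.
have ha : forall j, j < q.+1 -> 'C(q, j) * (q ^ (q - j) * 1 ^ j) * 2 ^ j <= 2 * q ^ q.
  move=> j lt; rewrite exp1n muln1.
  apply: (@leq_trans ('C(q, j) * q ^ (q - j) * (2 * j`!))).
    by rewrite leq_mul2l exp2_fact orbT.
  rewrite mulnCA -mulnA leq_mul2l; apply/orP; right.
  rewrite [q ^ (q - j) * _]mulnC mulnA bin_ffact.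
  apply: (@leq_trans (q ^ j * q ^ (q - j))); first by rewrite leq_mul2r ffact_le_exp orbT.
  by rewrite -expnD subnKC.
pose a j := if j < q.+1 then 'C(q, j) * (q ^ (q - j) * 1 ^ j) else 0.
have ha' : forall j, a j * 2 ^ j <= 2 * q ^ q.
  by move=> j; rewrite /a; case: ifP => lt; [exact: ha | rewrite mul0n].
have := sum_geom_bound ha' q.
rewrite big_ord_recl /= bin0 subn0 exp1n !muln1 mul1n.
have -> : \sum_(i < q) 'C(q, bump 0 i) * (q ^ (q - bump 0 i) * 1 ^ bump 0 i) =
          \sum_(1 <= j < q.+1) a j.
  rewrite big_add1 big_mkord; apply: eq_bigr => i _.
  by rewrite /a /bump /= add1n ltnS ltn_ord.
set S := \sum_(1 <= j < q.+1) a j; set p := 2 ^ q; set Q := q ^ q => h.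
have p0 : 0 < p by rewrite expn_gt0.
have : S <= 2 * Q.
  rewrite -(leq_pmul2l p0); nia.
lia.
Qed.

Lemma binsum_bound c k D : 0 < c -> 0 < k -> 0 < D -> 6 * (c * k) <= 2 ^ c ->
  \sum_(j < D.+1) 'C((c * D + 1) * k, j) < 2 ^ (c * D + 1).
Proof.
move=> c0 k0 D0 hc.
set q := c * k; set n := (c * D + 1) * k.
have q0 : 0 < q by rewrite muln_gt0 c0.
have nq : n = q * D + k by rewrite /n /q; lia.
have kq : k <= q by rewrite /q; nia.
have hD : D <= n by rewrite nq; nia.
set Sm := \sum_(j < D.+1) 'C(n, j).
have step1 : Sm * q ^ (n - D) <= (q + 1) ^ n.
  rewrite expnDn /Sm big_distrl /=.
  apply: (@leq_trans (\sum_(j < D.+1) 'C(n, j) * (q ^ (n - j) * 1 ^ j))).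
    apply: leq_sum => j _; rewrite exp1n muln1 leq_mul2l; apply/orP; right.
    by apply: leq_pexp2l => //; apply: leq_sub2l; rewrite -ltnS.
  rewrite (big_ord_widen _ (fun j => 'C(n, j) * (q ^ (n - j) * 1 ^ j)) (_ : D.+1 <= n.+1)) //.
  by rewrite big_mkcond /=; apply: leq_sum => i _; case: ifP.
have hk : (q + 1) ^ k <= 3 * q ^ k.
  have qk0 : 0 < q ^ (q - k) by rewrite expn_gt0 q0.
  rewrite -(leq_pmul2r qk0) -mulnA -expnD subnKC //.
  apply: leq_trans (e_bound q).
  have -> : (q + 1) ^ q = (q + 1) ^ k * (q + 1) ^ (q - k) by rewrite -expnD subnKC.
  by rewrite leq_mul2l expn_leb ?leq_addr ?orbT.
have step2 : (q + 1) ^ n <= 3 ^ D.+1 * q ^ n.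
  rewrite nq expnD expnM.
  apply: (@leq_trans ((3 * q ^ q) ^ D * (3 * q ^ k))).
    by apply: leq_mul => //; apply: expn_leb; apply: e_bound.
  by rewrite expnMn -expnM expnS expnD; apply: eq_leq; ring.
have step3 : Sm <= 3 ^ D.+1 * q ^ D.
  have qn0 : 0 < q ^ (n - D) by rewrite expn_gt0 q0.
  rewrite -(leq_pmul2r qn0) -mulnA -expnD subnKC //.
  exact: leq_trans step1 step2.
apply: leq_ltn_trans step3 _.
rewrite expnD expnM expn1.
have : (6 * q) ^ D <= (2 ^ c) ^ D by apply: expn_leb.
rewrite expnMn (_ : 6 = 2 * 3) // expnMn.
have : 2 <= 2 ^ D by rewrite -{1}(expn1 2) leq_exp2l.
have : 0 < q ^ D by rewrite expn_gt0 q0.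
rewrite expnS.
set a := 2 ^ D; set b := 3 ^ D; set r := q ^ D; set s := (2 ^ c) ^ D.
have : 0 < b by rewrite expn_gt0.
clearbody a b r s. nia.
Qed.

Definition cfun k := (trunc_log 2 k).+1 + (2 * (trunc_log 2 (trunc_log 2 k).+1).+1 + 5).

Lemma cfun_ok k : 0 < k -> 6 * (cfun k * k) <= 2 ^ cfun k.
Proof.
move=> k0; rewrite /cfun.
set l := (trunc_log 2 k).+1; set l' := (trunc_log 2 l).+1.
have hk : k < 2 ^ l by apply: trunc_log_ltn.
have hl : l < 2 ^ l' by apply: trunc_log_ltn.
have hll : l' <= l.
  have := @trunc_logP 2 l isT (ltn0Sn _); have := ltn_expl (trunc_log 2 l) (isT : 1 < 2).
  rewrite /l'; set u := trunc_log 2 l; set v := 2 ^ u; lia.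
rewrite expnD expnD mulnC expnM.
set A := 2 ^ l; set B := 2 ^ l'.
have h1 : 6 * (l + (2 * l' + 5)) <= B ^ 2 * 2 ^ 5.
  have l0 : 0 < l by [].
  rewrite (_ : 2 ^ 5 = 32) // expnS expn1; move: hl hll l0; rewrite -/B; clearbody A B l l'; nia.
rewrite mulnA [_ * k]mulnC -mulnA.
have eqB : (2 ^ 2) ^ l' = B ^ 2 by rewrite /B -!expnM mulnC.
rewrite eqB [_ * 6]mulnC -mulnA.
exact: leq_mul (ltnW hk) h1.
Qed.


Lemma sq_le_exp2 n : (n + 4) ^ 2 <= 2 ^ (n + 4).
Proof.
elim: n => [|n IH] //.
rewrite addSn [2 ^ _.+1]expnS.
apply: leq_trans (_ : 2 * (n + 4) ^ 2 <= _); last by rewrite leq_mul2l IH.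
move: IH; set p := 2 ^ (n + 4); clearbody p; nia.
Qed.

Lemma eventually_small M : exists T, forall t, T <= t ->
  (2 * trunc_log 2 t.+1 + 8) * M <= t.
Proof.
exists (2 ^ (2 * M + 9)) => t le.
set s := trunc_log 2 t.+1.
have hs : 2 ^ s <= t.+1 by apply: trunc_logP.
have Ss : 2 * M + 9 <= s.
  by apply: trunc_log_max => //; apply: leq_trans le _.
have := sq_le_exp2 (s - 4).
rewrite subnK; last by lia.
move: hs Ss; set p := 2 ^ s; clearbody p s; nia.
Qed.

Section Eps.
Variable R : realType.
Local Open Scope ring_scope.
Local Open Scope classical_set_scope.

Definition eps (k : nat) : R := (cfun k)%:R * ln 2 / ln k%:R - 1.

Lemma ln2_gt0 : 0 < ln (2 : R).
Proof. by apply: ln_gt0; rewrite ltr1n. Qed.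

Lemma eps_id k : (2 <= k)%N -> (1 + eps k) * (ln k%:R / ln 2) = (cfun k)%:R.
Proof.
move=> k2.
have l2 := ln2_gt0.
have lk : 0 < ln (k%:R : R) by apply: ln_gt0; rewrite ltr1n.
rewrite /eps; field.
by rewrite !lt0r_neq0.
Qed.

Lemma ln_natX (t : nat) : ln ((2 ^ t)%:R : R) = t%:R * ln 2.
Proof. by rewrite natrX lnXn ?ltr0n // mulr_natl. Qed.

Lemma eps_cvg : eps @ \oo --> 0.
Proof.
apply/cvgrPdist_lt => e e0.
pose M := (Num.truncn (e^-1)).+1.
have [T hT] := eventually_small M.
exists (2 ^ (maxn T 1))%N => // k /= le.
set t := trunc_log 2 k.
have tT : (maxn T 1 <= t)%N by apply: trunc_log_max.
have k0 : (0 < k)%N by apply: leq_trans le; rewrite expn_gt0.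
have hk1 : (2 ^ t <= k)%N by apply: trunc_logP.
have hk2 : (k < 2 ^ t.+1)%N by apply: trunc_log_ltn.
have hsmall := hT t (leq_trans (leq_maxl _ _) tT).
have t1 : (1 <= t)%N by apply: leq_trans (leq_maxr _ _) tT.
have hc : (cfun k * M <= t * M + t)%N by move: hsmall; rewrite /cfun -/t; lia.
have hc1 : (t < cfun k)%N by rewrite /cfun -/t; lia.
have l2 := ln2_gt0.
have hL1 : t%:R * ln 2 <= ln (k%:R : R).
  rewrite -ln_natX ler_ln ?posrE ?ltr0n ?expn_gt0 // ler_nat; exact: hk1.
have hL2 : ln (k%:R : R) < t.+1%:R * ln 2.
  rewrite -ln_natX ltr_ln ?posrE ?ltr0n ?expn_gt0 // ltr_nat; exact: hk2.
have hMe : 1 < M%:R * e.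
  rewrite -ltr_pdivrMr // div1r /M; exact: truncnS_gt.
have hcR : (cfun k)%:R * M%:R <= t%:R * M%:R + t%:R :> R by rewrite -!natrM -natrD ler_nat.
have hc1R : t.+1%:R <= (cfun k)%:R :> R by rewrite ler_nat.
have t1R : 1 <= t%:R :> R by rewrite ler1n.
have M0 : 0 < M%:R :> R by rewrite ltr0n.
have L0 : 0 < ln (k%:R : R) by apply: lt_le_trans hL1; apply: mulr_gt0 => //; lra.
rewrite -natr1 in hL2 hc1R.
have cte : (cfun k)%:R < t%:R + t%:R * e :> R by nra.
rewrite /eps sub0r normrN.
have A : 1 <= (cfun k)%:R * ln 2 / ln (k%:R : R) by rewrite ler_pdivlMr // mul1r; nra.
have B : (cfun k)%:R * ln 2 / ln (k%:R : R) < 1 + e by rewrite ltr_pdivrMr //; nra.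
rewrite ger0_norm; lra.
Qed.

End Eps.


Lemma card_Eset_le k H D : #|Eset k H D| <= \sum_(j < D.+1) 'C(H * k, j).
Proof.
apply: (@leq_trans #|\bigcup_(j < D.+1) [set P : ET k H | #|P| == j]|).
  apply: subset_leq_card; apply/fintype.subsetP => P.
  rewrite inE => PD; apply/bigcupP; exists (Ordinal (n := D.+1) (m := #|P|) PD) => //.
  by rewrite inE.
apply: leq_trans (card_bigcup_le _ _) _.
apply: eq_leq; apply: eq_bigr => j _.
by rewrite card_draws card_prod !card_ord.
Qed.

Lemma Eset_small k D : (2 <= k)%N -> (#|Eset k (cfun k * D + 1) D| < 2 ^ (cfun k * D + 1))%N.
Proof.
move=> k2; apply: leq_ltn_trans (card_Eset_le _ _ _) _.
case: D => [|D].
  by rewrite big_ord_recl big_ord0 bin0 muln0.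
have k0 : (0 < k)%N by apply: leq_trans k2.
apply: binsum_bound.
- by rewrite /cfun.
- exact: k0.
- by [].
- exact: cfun_ok.
Qed.

Local Open Scope classical_set_scope.
Local Open Scope ring_scope.

Theorem mainTheorem13 (R : realType) :
  exists eps : nat -> R, eps @ \oo --> 0 /\
  forall (k : nat), (2 <= k)%N ->
  forall (X : Type) (F : 'I_k -> set (X -> bool)) (g : {ffun 'I_k -> bool} -> bool),
    (opt_std R (COMPOSE F g) <=
     ((1 + eps k) * (ln (k%:R) / ln 2))%:E * \sum_(i < k) opt_std R (F i))%E.
Proof.
exists (@eps R); split; first exact: eps_cvg.
move=> k k2 X F g.
rewrite eps_id //.
set c := cfun k.
have opt_ge0 : forall (G : set (X -> bool)), (0 <= opt_std R G)%E.
  move=> G; apply: le_ereal_inf_tmp => y [L _ <-].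
  by apply: ereal_sup_ubound; left.
have c0 : (0 < c)%N by rewrite /c /cfun.
case: (pselect (exists i, opt_std R (F i) = +oo%E)) => [[i0 Hi0]|Hfin].
  have -> : (\sum_(i < k) opt_std R (F i) = +oo)%E.
    rewrite (bigD1 i0) //= Hi0 addye //.
    have := sume_ge0 (f := fun i => opt_std R (F i)) (P := fun i => i != i0)
       (fun t _ => opt_ge0 _) (index_enum _).
    by case: (\sum_(_ <- _ | _) _)%E.
  by rewrite gt0_muley ?lte_fin ?ltr0n // leey.
have Hfin' : forall i, exists r : R, opt_std R (F i) = r%:E /\ 0 <= r.
  move=> i; have := opt_ge0 (F i); case E: (opt_std R (F i)) => [r| |] //.
  - by move=> h; exists r; split; rewrite // -lee_fin.
  - by exfalso; apply: Hfin; exists i.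
have Hd : forall i, exists dL : nat * learner X,
    (dL.1%:R <= fine (opt_std R (F i))) /\
    forall f xs, F i f -> (mistakes dL.2 f xs <= dL.1)%N.
  move=> i; have [r [E r0]] := Hfin' i.
  pose e := (Num.truncn r).+1%:R - r.
  have e0 : 0 < e by rewrite subr_gt0 truncnS_gt.
  have fin : opt_std R (F i) \is a fin_num by rewrite E.
  have [y [L _ <-] hy] := lb_ereal_inf_adherent e0 fin.
  rewrite -/(opt_std R (F i)) E -EFinD /e addrC subrK in hy.
  exists (Num.truncn r, L); split.
    by rewrite E /= truncn_le.
  move=> f xs Ff /=.
  have : (((mistakes L f xs)%:R)%:E <= worst_mistakes R (F i) L)%E.
    by apply: ereal_sup_ubound; right; exists f => //; exists xs.
  move=> /le_lt_trans /(_ hy).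
  by rewrite lte_fin ltr_nat ltnS.
have [dL HdL] := choice Hd.
pose d i := (dL i).1; pose L i := (dL i).2.
set D := (\sum_i d i)%N.
pose H := (c * D + 1)%N.
have NH : (#|Eset k H D| < 2 ^ H)%N by apply: Eset_small.
have h1 : (opt_std R (COMPOSE F g) <= worst_mistakes R (COMPOSE F g) (master L g H D))%E.
  apply: ereal_inf_le; exists (worst_mistakes R (COMPOSE F g) (master L g H D)) => //.
apply: le_trans h1 _.
have h2 : (worst_mistakes R (COMPOSE F g) (master L g H D) <= (((c * D)%N)%:R)%:E)%E.
  apply: ge_ereal_sup => y [->|[f [fs [Ffs ->]] [xs _ <-]]].
    by rewrite lee_fin ler0n.
  rewrite lee_fin ler_nat.
  have Lb : forall i xs, (mistakes (L i) (fs i) xs <= d i)%N.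
    by move=> i xs'; apply: (HdL i).2.
  have := master_bound g Lb (leqnn D) NH xs.
  by rewrite /H addn1.
apply: le_trans h2 _.
have -> : (\sum_(i < k) opt_std R (F i) = (\sum_(i < k) fine (opt_std R (F i)))%:E)%E.
  rewrite -sumEFin; apply: eq_bigr => i _.
  by have [r [E _]] := Hfin' i; rewrite E.
rewrite -EFinM lee_fin natrM ler_wpM2l //.
rewrite /D natr_sum; apply: ler_sum => i _.
exact: (HdL i).1.
Qed.
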